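(* Let $\mathcal{A}$ be a $k$-linear, Hom-finite additive category and $n\in\mathbb{Z}_{\geq0}\cup\{\infty\}$. Assume $\mathrm{D}\mathcal{A}(X,-)\in\mathrm{mod}_{n}\mathcal{A}$ for every $X\in\mathcal{A}$. Then for every $i\in\mathbb{Z}$ the restriction functor $\rho_i:\mathrm{Mod}\,\mathsf{R}\mathcal{A}\to\mathrm{Mod}\,\mathcal{A}_i$ restricts to a functor $\mathrm{mod}_n\mathsf{R}\mathcal{A}\to\mathrm{mod}_n\mathcal{A}_i$.
   Context: $k$ a field, $\mathrm{D}=\mathrm{Hom}_k(-,k)$ applied pointwise. Modules over an additive category $\mathcal{C}$ are contravariant additive functors $\mathcal{C}\to\mathrm{Ab}$; $\mathrm{proj}\,\mathcal{C}$ = finitely generated projective modules (direct summands of representables). For $n\ge0$, $\mathrm{mod}_n\mathcal{C}$ is the full subcategory of modules $M$ with an exact sequence $P_n\to\cdots\to P_0\to M\to0$, $P_i\in\mathrm{proj}\,\mathcal{C}$; $\mathrm{mod}\,\mathcal{C}=\mathrm{mod}_\infty\mathcal{C}$ those with an infinite such resolution. Repetitive category $\mathsf{R}\mathcal{A}$: generated by objects $(X,i)$, $X\in\mathcal{A},i\in\mathbb{Z}$, with $\mathsf{R}\mathcal{A}((X,i),(Y,j))=\mathcal{A}(X,Y)$ if $i=j$, $\mathrm{D}\mathcal{A}(Y,X)$ if $j=i+1$, $0$ otherwise; same-degree composition is that of $\mathcal{A}$, composition with a degree-raising map uses the $\mathcal{A}$-bimodule structure of $\mathrm{D}\mathcal{A}$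 (for $f\in\mathcal{A}(X,Y)$, $g\in\mathrm{D}\mathcal{A}(Z,Y)$: $g\circ f=\mathrm{D}\mathcal{A}(Z,f)(g)$; for $f\in\mathrm{D}\mathcal{A}(Y,X)$, $g\in\mathcal{A}(Y,Z)$: $g\circ f=\mathrm{D}\mathcal{A}(g,X)(f)$), and two degree-raising maps compose to $0$. $\mathcal{A}_i=\mathrm{add}\{(X,i):X\in\mathcal{A}\}\cong\mathcal{A}$ and $\rho_i$ is restriction of $\mathsf{R}\mathcal{A}$-modules to $\mathcal{A}_i$. *)

(* Defs.v *)
From HB Require Import structures.
From mathcomp Require Import all_boot all_order all_algebra.
Unset Implicit Arguments. Unset Strict Implicit. Unset Printing Implicit Defensive.
Import GRing.Theory.
Local Open Scope ring_scope.

(* k-linear Hom-finite categories: Hom spaces are finite-dimensional   *)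
(* k-vector spaces (vectType k), composition k-bilinear.              *)
Record kcat (k : fieldType) := KCat {
  ob : Type;
  hom : ob -> ob -> vectType k;
  comp : forall X Y Z : ob, hom Y Z -> hom X Y -> hom X Z;
  idm : forall X : ob, hom X X }.
Arguments ob {k} _.
Arguments hom {k} _ _ _.
Arguments comp {k} _ {X Y Z}.
Arguments idm {k} _ X.

Definition is_klinear_cat (k : fieldType) (A : kcat k) : Prop :=
  [/\ (forall (X Y Z W : ob A) (h : hom A Z W) (g : hom A Y Z) (f : hom A X Y),
         comp A h (comp A g f) = comp A (comp A h g) f),
      (forall (X Y : ob A) (f : hom A X Y), comp A (idm A Y) f = f),
      (forall (X Y : ob A) (f : hom A X Y), comp A f (idm A X) = f),
      (forall (X Y Z : ob A) (a : k) (g g' : hom A Y Z) (f : hom A X Y),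
         comp A (a *: g + g') f = a *: comp A g f + comp A g' f) &
      (forall (X Y Z : ob A) (a : k) (g : hom A Y Z) (f f' : hom A X Y),
         comp A g (a *: f + f') = a *: comp A g f + comp A g f')].

Definition is_additive_kcat (k : fieldType) (A : kcat k) : Prop :=
  (exists Z : ob A, idm A Z = 0) /\
  forall X Y : ob A, exists (S : ob A) (i1 : hom A X S) (i2 : hom A Y S)
                            (p1 : hom A S X) (p2 : hom A S Y),
    [/\ comp A p1 i1 = idm A X, comp A p2 i2 = idm A Y,
        comp A p1 i2 = 0, comp A p2 i1 = 0 &
        comp A i1 p1 + comp A i2 p2 = idm A S].

Record precat := PreCat {
  pob : Type;
  phom : pob -> pob -> zmodType;
  pcomp : forall X Y Z : pob, phom Y Z -> phom X Y -> phom X Z;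
  pid : forall X : pob, phom X X }.
Arguments pcomp {_ X Y Z}.
Arguments pid {_} X.

Record pmod (C : precat) := PMod {
  mob : pob C -> zmodType;
  mact : forall X Y : pob C, phom C X Y -> mob Y -> mob X }.
Arguments mob {C} _ _.
Arguments mact {C} _ {X Y}.

Definition is_module (C : precat) (M : pmod C) : Prop :=
  [/\ (forall (X Y : pob C) (f g : phom C X Y) (m : mob M Y),
         mact M (f + g) m = mact M f m + mact M g m),
      (forall (X Y : pob C) (f : phom C X Y) (m m' : mob M Y),
         mact M f (m + m') = mact M f m + mact M f m'),
      (forall (X : pob C) (m : mob M X), mact M (pid X) m = m) &
      (forall (X Y Z : pob C) (g : phom C Y Z) (f : phom C X Y) (m : mob M Z),
         mact M (pcomp g f) m = mact M f (mact M g m))].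
Arguments is_module {C} M.

Definition natt (C : precat) (M N : pmod C) := forall X : pob C, mob M X -> mob N X.
Arguments natt {C} M N.

Definition is_natt (C : precat) (M N : pmod C) (t : natt M N) : Prop :=
  (forall (X : pob C) (m m' : mob M X), t X (m + m') = t X m + t X m') /\
  (forall (X Y : pob C) (f : phom C X Y) (m : mob M Y),
     t X (mact M f m) = mact N f (t Y m)).
Arguments is_natt {C M N} t.

Definition repr (C : precat) (Z : pob C) : pmod C :=
  @PMod C (fun Y => phom C Y Z) (fun X Y (f : phom C X Y) (g : phom C Y Z) => pcomp g f).
Arguments repr {C} Z.

(* finitely generated projective: direct summand of a finite direct sum of
   representables, written out with the coordinate maps of the sum *)
Definition is_fgproj (C : precat) (P : pmod C) : Prop :=
  is_module P /\
  exists (m : nat) (Xs : 'I_m -> pob C)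
         (s : forall j, natt P (repr (Xs j))) (r : forall j, natt (repr (Xs j)) P),
    (forall j, is_natt (s j) /\ is_natt (r j)) /\
    (forall (Y : pob C) (x : mob P Y), \sum_(j < m) r j Y (s j Y x) = x).
Arguments is_fgproj {C} P.

Inductive natinf := NFin of nat | NInf.
Definition ltn_inf (a : nat) (n : natinf) : bool :=
  match n with NFin m => (a < m)%N | NInf => true end.
Definition len_inf (a : nat) (n : natinf) : bool :=
  match n with NFin m => (a <= m)%N | NInf => true end.

(* mod_n C : there is an exact sequence P_n -> ... -> P_0 -> M -> 0
   (P_k -> P_{k-1} is d k.-1, P_0 -> M is e); for n = NInf an infinite one *)
Definition in_mod (C : precat) (n : natinf) (M : pmod C) : Prop :=
  is_module M /\
  exists (P : nat -> pmod C) (d : forall k : nat, natt (P k.+1) (P k)) (e : natt (P 0%N) M),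
    (forall k, len_inf k n -> is_fgproj (P k)) /\
    (forall k, ltn_inf k n -> is_natt (d k)) /\
    is_natt e /\
    (forall (Y : pob C) (x : mob M Y), exists y, e Y y = x) /\
    (ltn_inf 0 n -> forall (Y : pob C) (x : mob (P 0%N) Y),
        e Y x = 0 <-> exists y, d 0%N Y y = x) /\
    (forall k, ltn_inf k.+1 n -> forall (Y : pob C) (x : mob (P k.+1) Y),
        d k Y x = 0 <-> exists y, d k.+1 Y y = x).
Arguments in_mod {C} n M.

Definition precat_of (k : fieldType) (A : kcat k) : precat :=
  @PreCat (ob A) (fun X Y => hom A X Y : zmodType)
          (fun X Y Z g f => comp A g f) (fun X => idm A X).
Arguments precat_of {k} A.

Definition dualrep (k : fieldType) (A : kcat k) (X : ob A) : pmod (precat_of A) :=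
  @PMod (precat_of A) (fun Y => 'Hom(hom A X Y, k^o) : zmodType)
    (fun Y' Y (f : hom A Y' Y) (phi : 'Hom(hom A X Y, k^o)) =>
       linfun (fun g : hom A X Y' => phi (comp A f g))).
Arguments dualrep {k A} X.

(* A morphism (X,i) -> (Y,j) is stored in the ambient space             *)
(* A(X,Y) x D A(Y,X); the actual Hom space is the subspace               *)
(*   A(X,Y) x 0 if j = i, 0 x D A(Y,X) if j = i+1, 0 otherwise.           *)
Section Repetitive.
Variables (k : fieldType) (A : kcat k).
Local Notation pA := (@precat_of k A).

Definition amb (X Y : ob A) : vectType k :=
  (hom A X Y * 'Hom(hom A Y X, k^o))%type.

Definition rsp (X Y : ob A) (i j : int) : {vspace amb X Y} :=
  if i == j then lker (linfun (fun p : amb X Y => p.2))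
  else if j == i + 1 then lker (linfun (fun p : amb X Y => p.1))
  else 0%VS.

Definition homR (U V : ob A * int) : vectType k := subvs_of (rsp U.1 V.1 U.2 V.2).

Definition ambcomp (X Y Z : ob A) (g : amb Y Z) (f : amb X Y) : amb X Z :=
  (comp A g.1 f.1,
   linfun (fun h : hom A Z X => g.2 (comp A f.1 h))
   + linfun (fun h : hom A Z X => f.2 (comp A h g.1))).

Definition compR (U V W : ob A * int) (g : homR V W) (f : homR U V) : homR U W :=
  vsproj (rsp U.1 W.1 U.2 W.2) (ambcomp U.1 V.1 W.1 (vsval g) (vsval f)).

Definition idR (U : ob A * int) : homR U U :=
  vsproj (rsp U.1 U.1 U.2 U.2) (idm A U.1, 0).

Definition RA : precat :=
  @PreCat (ob A * int)%type (fun U V => homR U V : zmodType) compR idR.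

Definition RAi (i : int) : precat :=
  @PreCat (ob A) (fun X Y => homR (X, i) (Y, i) : zmodType)
    (fun X Y Z g f => compR (X, i) (Y, i) (Z, i) g f) (fun X => idR (X, i)).

Definition rho (i : int) (M : pmod RA) : pmod (RAi i) :=
  @PMod (RAi i) (fun X => mob M (X, i))
    (fun X Y (f : homR (X, i) (Y, i)) (m : mob M (Y, i)) => @mact RA M (X, i) (Y, i) f m).

End Repetitive.
Arguments is_klinear_cat {k} A.
Arguments is_additive_kcat {k} A.
Arguments RA {k} A.
Arguments RAi {k} A i.
Arguments rho {k A} i M.

(* Main.v *)
Require Import Defs.
From HB Require Import structures.
From mathcomp Require Import all_boot all_order all_algebra.
From Stdlib Require Import IndefiniteDescription FunctionalExtensionality.
Require Import Defs.
Import GRing.Theory.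
Local Open Scope ring_scope.


Section Addf.
Variables (V W : zmodType) (f : V -> W).
Hypothesis Hf : forall x y, f (x + y) = f x + f y.
Lemma addf0 : f 0 = 0.
Proof. have h := Hf 0 0; rewrite addr0 in h; by apply: (addrI (f 0)); rewrite -h addr0. Qed.
Lemma addfN y : f (- y) = - f y.
Proof. have h := Hf (- y) y; rewrite addNr addf0 in h; by apply/eqP; rewrite -addr_eq0 -h. Qed.
Lemma addfB x y : f (x - y) = f x - f y.
Proof. by rewrite Hf addfN. Qed.
Lemma addf_sum m (F : 'I_m -> V) : f (\sum_(j < m) F j) = \sum_(j < m) f (F j).
Proof. exact: (big_morph f Hf addf0). Qed.
End Addf.
Arguments addf0 {V W f}. Arguments addfN {V W f}. Arguments addfB {V W f}. Arguments addf_sum {V W f}.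

Section Ker.
Variables (V W : zmodType) (f : V -> W).
Definition kerT (Hf : forall x y, f (x + y) = f x + f y) := {x : V | f x == 0}.
Variable Hf : forall x y, f (x + y) = f x + f y.
HB.instance Definition _ := Choice.on (kerT Hf).
Definition kzero : kerT Hf := exist (fun x => f x == 0) 0 (introT eqP (addf0 Hf)).
Lemma kadd_p (a b : kerT Hf) : f (sval a + sval b) == 0.
Proof. case: a => a ha; case: b => b hb; by rewrite /= Hf (eqP ha) (eqP hb) addr0. Qed.
Definition kadd (a b : kerT Hf) : kerT Hf := exist (fun x => f x == 0) _ (kadd_p a b).
Lemma kopp_p (a : kerT Hf) : f (- sval a) == 0.
Proof. case: a => a ha; by rewrite /= (addfN Hf) (eqP ha) oppr0. Qed.
Definition kopp (a : kerT Hf) : kerT Hf := exist (fun x => f x == 0) _ (kopp_p a).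
Lemma kaddA : associative kadd. Proof. by move=> a b c; apply: val_inj; rewrite /= addrA. Qed.
Lemma kaddC : commutative kadd. Proof. by move=> a b; apply: val_inj; rewrite /= addrC. Qed.
Lemma kadd0 : left_id kzero kadd. Proof. by move=> a; apply: val_inj; rewrite /= add0r. Qed.
Lemma kaddN : left_inverse kzero kopp kadd. Proof. by move=> a; apply: val_inj; rewrite /= addNr. Qed.
HB.instance Definition _ := GRing.isZmodule.Build (kerT Hf) kaddA kaddC kadd0 kaddN.
Lemma ksvalD (a b : kerT Hf) : sval (a + b) = sval a + sval b. Proof. by []. Qed.
Lemma ksval0 : sval (0 : kerT Hf) = 0. Proof. by []. Qed.
Lemma ksval_inj (a b : kerT Hf) : sval a = sval b -> a = b.
Proof. exact: val_inj. Qed.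
Lemma ksval_eq0 (a : kerT Hf) : sval a = 0 -> a = 0.
Proof. by move=> h; apply: ksval_inj; rewrite h. Qed.
Lemma ksvalP (a : kerT Hf) : f (sval a) = 0.
Proof. by case: a => a /= /eqP. Qed.
Lemma kmk_p (m : V) : f (if f m == 0 then m else 0) == 0.
Proof. by case: ifP => // _; rewrite (addf0 Hf). Qed.
Definition kmk (m : V) : kerT Hf := exist (fun x => f x == 0) _ (kmk_p m).
Lemma kmkK m : f m = 0 -> sval (kmk m) = m.
Proof. by move=> h; rewrite /= h eqxx. Qed.
End Ker.

Lemma pairD (U V : zmodType) (a c : U) (b d : V) : (a, b) + (c, d) = (a + c, b + d) :> (U * V)%type.
Proof. by []. Qed.
Lemma pair0 (U V : zmodType) : (0 : (U * V)%type) = (0, 0). Proof. by []. Qed.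
Lemma pairN (U V : zmodType) (a : U) (b : V) : - (a, b) = (- a, - b) :> (U * V)%type. Proof. by []. Qed.

Definition leinf (m n : natinf) : bool :=
  match m, n with
  | _, NInf => true
  | NFin a, NFin b => (a <= b)%N
  | NInf, NFin _ => false end.
Lemma leinf_len m n k : leinf m n -> len_inf k m -> len_inf k n.
Proof. by case: m => [a|]; case: n => [b|] //= hab hk; apply: leq_trans hk hab. Qed.
Lemma leinf_ltn m n k : leinf m n -> ltn_inf k m -> ltn_inf k n.
Proof. by case: m => [a|]; case: n => [b|] //= hab hk; apply: leq_trans hk hab. Qed.
Arguments kmk {V W f}. Arguments kmkK {V W f}. Arguments ksvalP {V W f Hf}. Arguments ksval_eq0 {V W f Hf}. Arguments ksvalD {V W f Hf}.
Arguments ksval_inj {V W f Hf}. Arguments kerT {V W f}.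

Section Gen.
Variable C : precat.
Implicit Types M N P Q : pmod C.

Section ModLemmas.
Variable M : pmod C.
Hypothesis HM : is_module M.
Lemma modDf X Y (f g : phom C X Y) m : mact M (f + g) m = mact M f m + mact M g m.
Proof. by case: HM => h _ _ _; apply: h. Qed.
Lemma modD X Y (f : phom C X Y) m m' : mact M f (m + m') = mact M f m + mact M f m'.
Proof. by case: HM => _ h _ _; apply: h. Qed.
Lemma modI X m : mact M (pid X) m = m.
Proof. by case: HM => _ _ h _; apply: h. Qed.
Lemma modC X Y Z (g : phom C Y Z) (f : phom C X Y) m : mact M (pcomp g f) m = mact M f (mact M g m).
Proof. by case: HM => _ _ _ h; apply: h. Qed.
Lemma mod0 X Y (f : phom C X Y) : mact M f 0 = 0.
Proof. exact: (addf0 (@modD _ _ f)). Qed.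
Lemma modN X Y (f : phom C X Y) m : mact M f (- m) = - mact M f m.
Proof. exact: (addfN (@modD _ _ f)). Qed.
Lemma modB X Y (f : phom C X Y) m m' : mact M f (m - m') = mact M f m - mact M f m'.
Proof. exact: (addfB (@modD _ _ f)). Qed.
Lemma modf0 X Y (m : mob M Y) : mact M (0 : phom C X Y) m = 0.
Proof. exact: (addf0 (fun f g => @modDf _ _ f g m)). Qed.
Lemma mod_sum X Y (f : phom C X Y) n (F : 'I_n -> mob M Y) : mact M f (\sum_(j < n) F j) = \sum_(j < n) mact M f (F j).
Proof. exact: (addf_sum (@modD _ _ f)). Qed.
End ModLemmas.
Arguments modDf {M} HM {X Y} f g m. Arguments modD {M} HM {X Y} f m m'. Arguments modI {M} HM {X} m.
Arguments modC {M} HM {X Y Z} g f m. Arguments mod0 {M} HM {X Y} f. Arguments modN {M} HM {X Y} f m.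
Arguments modB {M} HM {X Y} f m m'. Arguments modf0 {M} HM {X Y} m. Arguments mod_sum {M} HM {X Y} f {n} F.

Section NattLemmas.
Variables (M N : pmod C) (t : natt M N).
Hypothesis Ht : is_natt t.
Lemma nattD X m m' : t X (m + m') = t X m + t X m'. Proof. exact: (proj1 Ht). Qed.
Lemma natt0 X : t X 0 = 0. Proof. exact: (addf0 (@nattD X)). Qed.
Lemma nattN X m : t X (- m) = - t X m. Proof. exact: (addfN (@nattD X)). Qed.
Lemma nattB X m m' : t X (m - m') = t X m - t X m'. Proof. exact: (addfB (@nattD X)). Qed.
Lemma natt_sum X n (F : 'I_n -> mob M X) : t X (\sum_(j < n) F j) = \sum_(j < n) t X (F j).
Proof. exact: (addf_sum (@nattD X)). Qed.
Lemma nattC X Y (f : phom C X Y) m : t X (mact M f m) = mact N f (t Y m). Proof. exact: (proj2 Ht). Qed.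
End NattLemmas.
Arguments nattD {M N t} Ht {X} m m'. Arguments natt0 {M N t} Ht {X}. Arguments nattN {M N t} Ht {X} m.
Arguments nattB {M N t} Ht {X} m m'. Arguments natt_sum {M N t} Ht {X n} F. Arguments nattC {M N t} Ht {X Y} f m.

Definition surj M N (t : natt M N) := forall Y x, exists y, t Y y = x.
Definition inj0 M N (t : natt M N) := forall Y x, t Y x = 0 -> x = 0.
Definition ncomp M N P (u : natt N P) (t : natt M N) : natt M P := fun Y x => u Y (t Y x).
Arguments surj {M N}. Arguments inj0 {M N}. Arguments ncomp {M N P}.
Lemma ncomp_natt M N P (u : natt N P) (t : natt M N) : is_natt u -> is_natt t -> is_natt (ncomp u t).
Proof.
move=> Hu Ht; split=> [Y m m'|X Y f m]; rewrite /ncomp.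
  by rewrite (nattD Ht) (nattD Hu).
by rewrite (nattC Ht) (nattC Hu).
Qed.
Lemma ncomp_surj M N P (u : natt N P) (t : natt M N) : surj u -> surj t -> surj (ncomp u t).
Proof. move=> Hu Ht Y x; have [y <-] := Hu Y x; have [z <-] := Ht Y y; by exists z. Qed.

Definition exseq (n : natinf) (X : nat -> pmod C) (d : forall k, natt (X k.+1) (X k))
    (N : pmod C) (e : natt (X 0%N) N) : Prop :=
  (forall k, ltn_inf k n -> is_natt (d k)) /\
  is_natt e /\
  (forall (Y : pob C) (x : mob N Y), exists y, e Y y = x) /\
  (ltn_inf 0 n -> forall (Y : pob C) (x : mob (X 0%N) Y),
      e Y x = 0 <-> exists y, d 0%N Y y = x) /\
  (forall k, ltn_inf k.+1 n -> forall (Y : pob C) (x : mob (X k.+1) Y),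
      d k Y x = 0 <-> exists y, d k.+1 Y y = x).

Definition resol (Q : pmod C -> Prop) (n : natinf) (N : pmod C) : Prop :=
  is_module N /\ exists (X : nat -> pmod C) (d : forall k, natt (X k.+1) (X k)) (e : natt (X 0%N) N),
    (forall k, len_inf k n -> Q (X k)) /\ exseq n X d N e.

Lemma in_modE n N : in_mod n N = resol (@is_fgproj C) n N.
Proof. by []. Qed.

Lemma exseq_mono m n X d N e : leinf m n -> exseq n X d N e -> exseq m X d N e.
Proof.
move=> hmn [H1 [H2 [H3 [H4 H5]]]]; split; [|split; [|split; [|split]]] => //.
- by move=> k hk; apply: H1; apply: leinf_ltn hk.
- by move=> hk; apply: H4; apply: leinf_ltn hk.
- by move=> k hk; apply: H5; apply: leinf_ltn hk.
Qed.

Lemma resol_mono (Q Q' : pmod C -> Prop) m n N :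
  (forall P, Q P -> Q' P) -> leinf m n -> resol Q n N -> resol Q' m N.
Proof.
move=> hQ hmn [HN [X [d [e [hX hex]]]]]; split=> //; exists X, d, e; split.
  by move=> k hk; apply: hQ; apply: hX; apply: leinf_len hk.
exact: exseq_mono hex.
Qed.

Lemma in_mod_mono m n N : leinf m n -> in_mod n N -> in_mod m N.
Proof. move=> hmn; rewrite !in_modE; exact: (@resol_mono (@is_fgproj C) (@is_fgproj C) m n N (fun P h => h) hmn). Qed.

Lemma resol_iso (Q : pmod C -> Prop) n N N' (t : natt N N') :
  is_module N' -> is_natt t -> inj0 t -> surj t -> resol Q n N -> resol Q n N'.
Proof.
move=> HN' Ht Hi Hs [HN [X [d [e [hX [H1 [H2 [H3 [H4 H5]]]]]]]]]; split=> //.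
exists X, d, (ncomp t e); split=> //; split; [|split; [|split; [|split]]] => //.
- exact: ncomp_natt.
- exact: ncomp_surj.
- move=> h0 Y x; rewrite -H4 //; rewrite /ncomp; split; last by move=> ->; rewrite (natt0 Ht).
  exact: Hi.
Qed.

Definition zmod0 : pmod C := @PMod C (fun _ => ('I_1 : zmodType)) (fun X Y f m => m).
Lemma zmod0_eq X (x : mob zmod0 X) : x = 0.
Proof. by apply: val_inj; case: x => [[|]]. Qed.
Lemma zmod0_mod : is_module zmod0.
Proof. split=> //= X Y f g m; by rewrite [m](zmod0_eq X) addr0. Qed.
Lemma ord0_False (j : 'I_0) : False. Proof. by case: j. Qed.
Lemma zmod0_proj : is_fgproj zmod0.
Proof.
split; first exact: zmod0_mod.
exists 0%N, (fun j => False_rect _ (ord0_False j)),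
  (fun j => False_rect _ (ord0_False j)), (fun j => False_rect _ (ord0_False j)).
split; first by move=> j; case: (ord0_False j).
by move=> Y x; rewrite big_ord0 [RHS]zmod0_eq.
Qed.
Definition nzero M N : natt M N := fun Y x => 0.
Lemma nzero_natt M N : is_module N -> is_natt (nzero M N).
Proof. move=> HN; split=> [Y m m'|X Y f m]; rewrite /nzero ?addr0 //; by rewrite mod0. Qed.

Definition msum M N : pmod C :=
  @PMod C (fun X => ((mob M X * mob N X)%type : zmodType))
    (fun X Y f p => (mact M f p.1, mact N f p.2)).
Lemma msum_mod M N : is_module M -> is_module N -> is_module (msum M N).
Proof.
move=> HM HN; split=> /= [X Y f g m|X Y f m m'|X m|X Y Z g f m].
- by rewrite (modDf HM) (modDf HN).
- by rewrite (modD HM) (modD HN).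
- by rewrite (modI HM) (modI HN); case: m.
- by rewrite (modC HM) (modC HN).
Qed.
Definition npair P M N (t : natt P M) (u : natt P N) : natt P (msum M N) := fun Y x => (t Y x, u Y x).
Definition ncopair M N P (t : natt M P) (u : natt N P) : natt (msum M N) P := fun Y p => t Y p.1 + u Y p.2.
Arguments npair {P M N}. Arguments ncopair {M N P}.
Lemma npair_natt P M N (t : natt P M) (u : natt P N) : is_natt t -> is_natt u -> is_natt (npair t u).
Proof.
move=> Ht Hu; split=> [Y m m'|X Y f m]; rewrite /npair /=.
  by rewrite (nattD Ht) (nattD Hu) pairD.
by rewrite (nattC Ht) (nattC Hu).
Qed.
Lemma ncopair_natt M N P (t : natt M P) (u : natt N P) : is_module P -> is_natt t -> is_natt u -> is_natt (ncopair t u).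
Proof.
move=> HP Ht Hu; split=> [Y [a b] [a' b']|X Y f m]; rewrite /ncopair /=.
  by rewrite (nattD Ht) (nattD Hu) addrACA.
by rewrite (nattC Ht) (nattC Hu) (modD HP).
Qed.
Definition nfst M N : natt (msum M N) M := fun Y p => p.1.
Definition nsnd M N : natt (msum M N) N := fun Y p => p.2.
Definition ninl M N : natt M (msum M N) := fun Y x => (x, 0).
Definition ninr M N : natt N (msum M N) := fun Y x => (0, x).
Lemma nfst_natt M N : is_natt (nfst M N). Proof. by split=> // Y [a b] [c d]. Qed.
Lemma nsnd_natt M N : is_natt (nsnd M N). Proof. by split=> // Y [a b] [c d]. Qed.
Lemma ninl_natt M N : is_module N -> is_natt (ninl M N).
Proof. move=> HN; split=> [Y m m'|X Y f m]; rewrite /ninl /=; first by rewrite pairD addr0. by rewrite (mod0 HN). Qed.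
Lemma ninr_natt M N : is_module M -> is_natt (ninr M N).
Proof. move=> HM; split=> [Y m m'|X Y f m]; rewrite /ninr /=; first by rewrite pairD addr0. by rewrite (mod0 HM). Qed.

Lemma msum_proj M N : is_fgproj M -> is_fgproj N -> is_fgproj (msum M N).
Proof.
move=> [HM [m1 [Xs1 [s1 [r1 [Hsr1 Hsum1]]]]]] [HN [m2 [Xs2 [s2 [r2 [Hsr2 Hsum2]]]]]].
split; first exact: msum_mod.
pose Xs := fun j : 'I_(m1 + m2) => match split j with inl a => Xs1 a | inr b => Xs2 b end.
pose s := fun j : 'I_(m1 + m2) =>
  match split j as sj return natt (msum M N) (repr (match sj with inl a => Xs1 a | inr b => Xs2 b end)) with
  | inl a => fun Y p => s1 a Y p.1 | inr b => fun Y p => s2 b Y p.2 end.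
pose r := fun j : 'I_(m1 + m2) =>
  match split j as sj return natt (repr (match sj with inl a => Xs1 a | inr b => Xs2 b end)) (msum M N) with
  | inl a => fun Y x => (r1 a Y x, 0) | inr b => fun Y x => (0, r2 b Y x) end.
exists (m1 + m2)%N, Xs, s, r; split.
  move=> j; rewrite /s /r /Xs; case: (split j) => [a|b].
    have [Hs Hr] := Hsr1 a; split.
      by split=> [Y [p1 p2] [p1' p2']|X Y f p] /=; rewrite ?(nattD Hs) ?(nattC Hs).
    split=> [Y p p'|X Y f p] /=; first by rewrite (nattD Hr) pairD addr0.
    by rewrite (nattC Hr) (mod0 HN).
  have [Hs Hr] := Hsr2 b; split.
    by split=> [Y [p1 p2] [p1' p2']|X Y f p] /=; rewrite ?(nattD Hs) ?(nattC Hs).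
  split=> [Y p p'|X Y f p] /=; first by rewrite (nattD Hr) pairD addr0.
  by rewrite (nattC Hr) (mod0 HM).
move=> Y [x y].
pose F := fun j : 'I_(m1 + m2) => match split j with
  | inl a => ((r1 a Y (s1 a Y x), 0) : mob (msum M N) Y) | inr b => (0, r2 b Y (s2 b Y y)) end.
have -> : \sum_(j < m1 + m2) r j Y (s j Y (x, y)) = \sum_(j < m1 + m2) F j.
  by apply: eq_bigr => j _; rewrite /r /s /F; case: (split j).
rewrite big_split_ord /=.
have -> : \sum_(i < m1) F (lshift m2 i) = \sum_(i < m1) ((r1 i Y (s1 i Y x), 0) : mob (msum M N) Y).
  apply: eq_bigr => i _; rewrite /F; have := unsplitK (inl i : 'I_m1 + 'I_m2); rewrite /= => ->; by [].
have -> : \sum_(i < m2) F (rshift m1 i) = \sum_(i < m2) ((0, r2 i Y (s2 i Y y)) : mob (msum M N) Y).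
  apply: eq_bigr => i _; rewrite /F; have := unsplitK (inr i : 'I_m1 + 'I_m2); rewrite /= => ->; by [].
have E1 : forall n (G : 'I_n -> mob M Y), \sum_(i < n) ((G i, 0) : mob (msum M N) Y) = (\sum_(i < n) G i, 0).
  move=> n G; elim/big_rec2: _ => //= i a [b c] _ ->; by rewrite pairD addr0.
have E2 : forall n (G : 'I_n -> mob N Y), \sum_(i < n) ((0, G i) : mob (msum M N) Y) = (0, \sum_(i < n) G i).
  move=> n G; elim/big_rec2: _ => //= i a [b c] _ ->; by rewrite pairD addr0.
by rewrite E1 E2 Hsum1 Hsum2 pairD addr0 add0r.
Qed.

Definition kmod M N (t : natt M N) (Ht : is_natt t) : pmod C :=
  @PMod C (fun X => (kerT (@nattD M N t Ht X) : zmodType))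
    (fun X Y f m => kmk (@nattD M N t Ht X) (mact M f (sval m))).
Arguments kmod {M N t}.
Section KerMod.
Variables (M N : pmod C) (t : natt M N) (Ht : is_natt t).
Hypotheses (HM : is_module M) (HN : is_module N).
Lemma kact X Y (f : phom C X Y) (m : mob (kmod Ht) Y) : sval (mact (kmod Ht) f m) = mact M f (sval m).
Proof. apply: kmkK; by rewrite (nattC Ht) (ksvalP m) (mod0 HN). Qed.
Lemma kmod_mod : is_module (kmod Ht).
Proof.
split=> [X Y f g m|X Y f m m'|X m|X Y Z g f m]; apply: ksval_inj; rewrite ?ksvalD !kact //.
- by rewrite (modDf HM).
- by rewrite ksvalD (modD HM).
- by rewrite (modI HM).
- by rewrite (modC HM).
Qed.
Definition kinc : natt (kmod Ht) M := fun X m => sval m.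
Lemma kinc_natt : is_natt kinc.
Proof. split=> // X Y f m; by rewrite /kinc kact. Qed.
Lemma kinc_inj0 : inj0 kinc.
Proof. move=> Y x; exact: ksval_eq0. Qed.
Definition kfac Q (u : natt Q M) : natt Q (kmod Ht) := fun X q => kmk (@nattD M N t Ht X) (u X q).
Lemma kfacK Q (u : natt Q M) X q : t X (u X q) = 0 -> sval (kfac _ u X q) = u X q.
Proof. exact: kmkK. Qed.
Lemma kfac_natt Q (u : natt Q M) : is_natt u -> (forall X q, t X (u X q) = 0) -> is_natt (kfac _ u).
Proof.
move=> Hu H0; split=> [Y m m'|X Y f m]; apply: ksval_inj.
  by rewrite ksvalD !kfacK ?H0 // (nattD Hu).
by rewrite kact kfacK ?H0 // kfacK ?H0 // (nattC Hu).
Qed.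
Lemma kmod_eq0 X (x : mob (kmod Ht) X) : (x = 0) <-> (sval x = 0).
Proof. by split=> [->|/ksval_eq0]. Qed.
End KerMod.
Arguments kact {M N t Ht} HN {X Y} f m. Arguments kmod_mod {M N t Ht} HM HN.
Arguments kinc {M N t Ht}. Arguments kmod_eq0 {M N t Ht X}. Arguments kinc_natt {M N t Ht} HN. Arguments kfac {M N t Ht Q}.
Arguments kfacK {M N t Ht Q} u {X} q. Arguments kfac_natt {M N t Ht} HN {Q u}.

Section Cat.
Hypothesis Hass : forall X Y Z W (h : phom C Z W) (g : phom C Y Z) (f : phom C X Y),
  pcomp h (pcomp g f) = pcomp (pcomp h g) f.
Hypothesis Hidl : forall X Y (f : phom C X Y), pcomp (pid Y) f = f.
Hypothesis Hidr : forall X Y (f : phom C X Y), pcomp f (pid X) = f.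
Hypothesis HaddL : forall X Y Z (g g' : phom C Y Z) (f : phom C X Y),
  pcomp (g + g') f = pcomp g f + pcomp g' f.
Hypothesis HaddR : forall X Y Z (g : phom C Y Z) (f f' : phom C X Y),
  pcomp g (f + f') = pcomp g f + pcomp g f'.

Lemma repr_mod (Z : pob C) : is_module (repr Z).
Proof. split=> /= [X Y f g m|X Y f m m'|X m|X Y Z' g f m]; by rewrite ?HaddR ?HaddL ?Hidr ?Hass. Qed.
Lemma repr_proj (Z : pob C) : is_fgproj (repr Z).
Proof.
split; first exact: repr_mod.
exists 1%N, (fun _ => Z), (fun _ Y x => x), (fun _ Y x => x); split; first by move=> j; split; split.
by move=> Y x; rewrite big_ord1.
Qed.

Lemma liftP {P M N} {f : natt P N} {g : natt M N} :
  is_fgproj P -> is_module M -> is_natt f -> is_natt g -> surj g ->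
  exists h : natt P M, is_natt h /\ forall Y x, g Y (h Y x) = f Y x.
Proof.
move=> [HP [m [Xs [s [r [Hsr Hsum]]]]]] HM Hf Hg Hs.
have Hm : forall j, {a : mob M (Xs j) | g _ a = f _ (r j _ (pid (Xs j)))}.
  by move=> j; apply: constructive_indefinite_description; apply: Hs.
exists (fun Y x => \sum_(j < m) mact M (s j Y x) (sval (Hm j))); split.
  split=> [Y x x'|X Y f' x].
    rewrite -big_split /=; apply: eq_bigr => j _.
    by rewrite (nattD (proj1 (Hsr j))) (modDf HM).
  rewrite (mod_sum HM); apply: eq_bigr => j _.
  by rewrite (nattC (proj1 (Hsr j))) /= (modC HM).
move=> Y x; rewrite (natt_sum Hg) -{2}(Hsum Y x) (natt_sum Hf); apply: eq_bigr => j _.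
rewrite (nattC Hg) (proj2_sig (Hm j)) -(nattC Hf) -(nattC (proj2 (Hsr j))) /=.
by rewrite Hidl.
Qed.

Lemma fg_mod {n P} : is_fgproj P -> in_mod n P.
Proof.
move=> HP; have HPm := proj1 HP; rewrite in_modE; split=> //.
exists (fun k => if k is 0 then P else zmod0), (fun k => nzero _ _), (fun Y x => x).
split; first by move=> [|k] _ //; exact: zmod0_proj.
split; [|split; [|split; [|split]]].
- move=> [|k] _; apply: nzero_natt => //; exact: zmod0_mod.
- by split.
- by move=> Y x; exists x.
- by move=> _ Y x; split=> [->|[y <-]] //; exists 0.
- move=> k _ Y x; split=> [_|//]; exists 0; by rewrite (zmod0_eq _ x).
Qed.

Lemma mod_elim {n N} : in_mod n N -> exists P (e : natt P N), is_fgproj P /\ is_natt e /\ surj e.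
Proof.
move=> [HN [X [d [e [hX [_ [He [Hs _]]]]]]]]; exists (X 0%N), e; split=> //.
by apply: hX; case: n.
Qed.

Lemma mod0_intro {N P} {e : natt P N} : is_module N -> is_fgproj P -> is_natt e -> surj e -> in_mod (NFin 0) N.
Proof.
move=> HN HP He Hs; split=> //; exists (fun _ => P), (fun _ => nzero _ _), e.
by split=> //; split=> //.
Qed.

Lemma char_elim {n N} : in_mod (NFin n.+1) N ->
  exists P (e : natt P N) (He : is_natt e), is_fgproj P /\ surj e /\ in_mod (NFin n) (kmod He).
Proof.
move=> [HN [X [d [e [hX [Hd [He [Hs [H0 Hk]]]]]]]]].
have HX0 : is_fgproj (X 0%N) by apply: hX.
have Hd0 : is_natt (d 0%N) by apply: Hd.
have Hde : forall Y y, e Y (d 0%N Y y) = 0 by move=> Y y; apply/(H0 isT); exists y.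
exists (X 0%N), e, He; split=> //; split=> //.
split; first exact: kmod_mod (proj1 HX0) HN.
exists (fun k => X k.+1), (fun k => d k.+1), (kfac (d 0%N)); split.
  by move=> k hk; apply: hX.
split; [|split; [|split; [|split]]].
- by move=> k hk; apply: Hd.
- by apply: (kfac_natt HN); [exact: Hd0 | exact: Hde].
- move=> Y x; have := ksvalP x => /(H0 isT) [y hy]; exists y.
  by apply: ksval_inj; rewrite kfacK ?Hde.
- move=> hn Y x; rewrite kmod_eq0 kfacK ?Hde //; exact: Hk.
- move=> k hk Y x; exact: Hk.
Qed.

Lemma char_intro {n N P} {e : natt P N} {He : is_natt e} :
  is_module N -> is_fgproj P -> surj e -> in_mod (NFin n) (kmod He) -> in_mod (NFin n.+1) N.
Proof.
move=> HN HP Hs [HK [Q [dq [eq [hQ [Hdq [Heq [Hsq [Hq0 Hqk]]]]]]]]].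
split=> //.
pose X := fun k => match k with 0 => P | k'.+1 => Q k' end.
pose d := fun k => match k return natt (Q k) (X k) with
  | 0 => ncomp kinc eq | k'.+1 => dq k' end.
exists X, d, e; split.
  by move=> [|k] hk //=; apply: hQ.
split; [|split; [|split; [|split]]] => //.
- move=> [|k] hk /=; last by apply: Hdq.
  apply: ncomp_natt => //; exact: kinc_natt.
- move=> _ Y x; split.
    move=> hx; have [y hy] := Hsq Y (kmk (@nattD _ _ _ He Y) x).
    by exists y; rewrite /d /ncomp /kinc hy kmkK.
  by move=> [y <-]; rewrite /d /ncomp /kinc ksvalP.
- move=> [|k] hk Y x /=.
    rewrite /d /ncomp /kinc -(kmod_eq0 (eq Y x)); exact: Hq0.
  exact: Hqk.
Qed.

Lemma cover_surj {A W Cm R R'} {i : natt A W} {p : natt W Cm} {e : natt R A} {e' : natt R' Cm} {l : natt R' W} :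
  is_natt i -> is_natt p -> is_natt l -> surj p -> surj e -> surj e' ->
  (forall Y w, p Y w = 0 <-> exists a, i Y a = w) ->
  (forall Y x, p Y (l Y x) = e' Y x) ->
  surj (ncopair (ncomp i e) l).
Proof.
move=> Hi Hp Hl Hsp Hse Hse' Hex Hlp Y w.
have [c hc] := Hse' Y (p Y w).
have : p Y (w - l Y c) = 0 by rewrite (nattB Hp) Hlp hc subrr.
move/Hex=> [a ha]; have [r hr] := Hse Y a.
by exists (r, c); rewrite /ncopair /ncomp /= hr ha subrK.
Qed.

Lemma ext_fin n : forall A W Cm (i : natt A W) (p : natt W Cm),
  is_module W -> is_natt i -> is_natt p -> inj0 i -> surj p ->
  (forall Y w, p Y w = 0 <-> exists a, i Y a = w) ->
  in_mod (NFin n) A -> in_mod (NFin n) Cm -> in_mod (NFin n) W.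
Proof.
elim: n => [|n IH] A W Cm i p HW Hi Hp Hinj Hsp Hex HA HC.
  have [R [e [HR [He Hse]]]] := mod_elim HA.
  have [R' [e' [HR' [He' Hse']]]] := mod_elim HC.
  have [l [Hl Hlp]] := liftP HR' HW He' Hp Hsp.
  apply: (mod0_intro (e := ncopair (ncomp i e) l)) => //.
  - exact: msum_proj.
  - by apply: ncopair_natt => //; exact: ncomp_natt.
  - exact: (cover_surj Hi Hp Hl Hsp Hse Hse' Hex Hlp).
have HAm := proj1 HA; have HCm := proj1 HC.
have [R [e [He [HR [Hse HKA]]]]] := char_elim HA.
have [R' [e' [He' [HR' [Hse' HKC]]]]] := char_elim HC.
have [l [Hl Hlp]] := liftP HR' HW He' Hp Hsp.
have Heta : is_natt (ncopair (ncomp i e) l) by apply: ncopair_natt => //; exact: ncomp_natt.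
have HRm := proj1 HR; have HR'm := proj1 HR'.
apply: (char_intro (He := Heta)) => //.
  exact: msum_proj.
  exact: (cover_surj Hi Hp Hl Hsp Hse Hse' Hex Hlp).
have Hi0 : forall Y (a : mob (kmod He) Y),
    ncopair (ncomp i e) l Y (ncomp (ninl R R') kinc Y a) = 0.
  move=> Y a; rewrite /ncopair /ncomp /ninl /kinc /= (ksvalP a) (natt0 Hi) (natt0 Hl); by rewrite addr0.
have Hp0 : forall Y (w : mob (kmod Heta) Y), e' Y (ncomp (nsnd R R') kinc Y w) = 0.
  move=> Y w; rewrite /ncomp /nsnd /kinc -Hlp.
  have := ksvalP w; rewrite /ncopair /ncomp; case: (sval w) => [r c] /= h.
  have -> : l Y c = - i Y (e Y r) by apply/eqP; rewrite -addr_eq0 addrC h.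
  rewrite (nattN Hp); apply/eqP; rewrite oppr_eq0; apply/eqP; apply/Hex; by exists (e Y r).
apply: (IH (kmod He) (kmod Heta) (kmod He')
  (kfac (ncomp (ninl R R') kinc)) (kfac (ncomp (nsnd R R') kinc))) => //.
- apply: kmod_mod => //; exact: msum_mod.
- apply: (kfac_natt HW) => //; apply: ncomp_natt; [exact: ninl_natt|exact: kinc_natt].
- apply: (kfac_natt HCm) => //; apply: ncomp_natt; [exact: nsnd_natt|exact: kinc_natt].
- move=> Y a /kmod_eq0; rewrite kfacK // /ncomp /ninl /kinc => -[] /ksval_eq0 //.
- move=> Y c.
  have : p Y (l Y (sval c)) = 0 by rewrite Hlp (ksvalP c).
  move/Hex=> [a0 ha0]; have [r hr] := Hse Y a0.
  have Hw : ncopair (ncomp i e) l Y (- r, sval c) = 0.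
    by rewrite /ncopair /ncomp /= (nattN He) (nattN Hi) hr ha0 addNr.
  exists (kmk (@nattD _ _ _ Heta Y) (- r, sval c)).
  by apply: ksval_inj; rewrite kfacK ?Hp0 // /ncomp /nsnd /kinc kmkK.
- move=> Y w; split.
    move=> /kmod_eq0; rewrite kfacK ?Hp0 // => h0.
    have h0' : (sval w).2 = 0 := h0.
    have hw : e Y (sval w).1 = 0.
      apply: Hinj; have := ksvalP w; by rewrite /ncopair /ncomp h0' (natt0 Hl) addr0.
    exists (kmk (@nattD _ _ _ He Y) (sval w).1); apply: ksval_inj; rewrite kfacK ?Hi0 //.
    rewrite /ncomp /ninl /kinc kmkK // -h0'; by case: (sval w).
  move=> [a <-]; apply/kmod_eq0; rewrite kfacK ?Hp0 // /ncomp /nsnd /kinc kfacK ?Hi0 //.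
Qed.

Lemma G_fin n : forall N (X : nat -> pmod C) (d : forall k, natt (X k.+1) (X k)) (e : natt (X 0%N) N),
  is_module N -> exseq (NFin n) X d N e ->
  (forall k, (k <= n)%N -> in_mod (NFin n) (X k)) -> in_mod (NFin n) N.
Proof.
elim: n => [|n IH] N X d e HN [Hd [He [Hs [H0 Hk]]]] HX.
  have [R [eps [HR [Heps Hseps]]]] := mod_elim (HX 0%N isT).
  apply: (mod0_intro (e := ncomp e eps)) => //; [exact: ncomp_natt | exact: ncomp_surj].
have HX0 := HX 0%N isT; have HX1 := HX 1%N isT.
have HX0m := proj1 HX0; have HX1m := proj1 HX1.
have [R [eps [Heps [HR [Hseps HKe]]]]] := char_elim HX0.
have HRm := proj1 HR.
have Hd0 : is_natt (d 0%N) by apply: Hd.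
have Hed : forall Y x, e Y (d 0%N Y x) = 0 by move=> Y x; apply/(H0 isT); exists x.
pose om : natt (msum R (X 1%N)) (X 0%N) := fun Y p => eps Y p.1 - d 0%N Y p.2.
have Hom : is_natt om.
  split=> [Y [a b] [a' b']|X' Y f [a b]]; rewrite /om /=.
    by rewrite (nattD Heps) (nattD Hd0) opprD addrACA.
  by rewrite (nattC Heps) (nattC Hd0) (modB HX0m).
have omK : forall Y (w : mob (kmod Hom) Y), eps Y (sval w).1 = d 0%N Y (sval w).2.
  by move=> Y w; apply/eqP; rewrite -subr_eq0; apply/eqP; exact: (ksvalP w).
have HE : is_natt (ncomp e eps) by exact: ncomp_natt.
apply: (char_intro (He := HE)) => //; first exact: ncomp_surj.
have Hi0 : forall Y (a : mob (kmod Heps) Y), om Y (ncomp (ninl R (X 1%N)) kinc Y a) = 0.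
  by move=> Y a; rewrite /om /ncomp /ninl /kinc /= (ksvalP a) (natt0 Hd0) subr0.
have HW : in_mod (NFin n) (kmod Hom).
  apply: (ext_fin n (kmod Heps) (kmod Hom) (X 1%N) (kfac (ncomp (ninl R (X 1%N)) kinc)) (ncomp (nsnd R (X 1%N)) kinc)).
  - apply: kmod_mod => //; exact: msum_mod.
  - apply: (kfac_natt HX0m) Hi0; apply: ncomp_natt; [exact: ninl_natt | exact: kinc_natt].
  - apply: ncomp_natt; [exact: nsnd_natt | exact: kinc_natt].
  - move=> Y a /kmod_eq0; rewrite kfacK ?Hi0 // /ncomp /ninl /kinc => -[] /ksval_eq0 //.
  - move=> Y x; have [r hr] := Hseps Y (d 0%N Y x).
    exists (kmk (@nattD _ _ _ Hom Y) (r, x)).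
    by rewrite /ncomp /nsnd /kinc kmkK // /om /= hr subrr.
  - move=> Y w; split.
      rewrite /ncomp /nsnd /kinc => h0.
      have hw : eps Y (sval w).1 = 0 by rewrite omK h0 (natt0 Hd0).
      exists (kmk (@nattD _ _ _ Heps Y) (sval w).1); apply: ksval_inj; rewrite kfacK ?Hi0 //.
      rewrite /ncomp /ninl /kinc kmkK // -h0; by case: (sval w).
    move=> [a <-]; rewrite /ncomp /nsnd /kinc kfacK ?Hi0 //.
  - exact: HKe.
  - exact: (in_mod_mono (NFin n) (NFin n.+1) _ (leqnSn n) HX1).
pose Yk := fun k => match k with 0 => kmod Hom | k'.+1 => X k'.+2 end.
pose u0 : natt (X 2%N) (msum R (X 1%N)) := ncomp (ninr R (X 1%N)) (d 1%N).
pose dY := fun k => match k return natt (X k.+2) (Yk k) with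
  | 0 => kfac (Ht := Hom) u0 | k'.+1 => d k'.+2 end.
pose eK : natt (kmod Hom) (kmod HE) := kfac (ncomp (nfst R (X 1%N)) kinc).
have HeK0 : forall Y (w : mob (kmod Hom) Y), ncomp e eps Y (ncomp (nfst R (X 1%N)) kinc Y w) = 0.
  by move=> Y w; rewrite /ncomp /nfst /kinc omK Hed.
have Hu0 : (0 < n)%N -> forall Y x, om Y (u0 Y x) = 0.
  move=> hn Y x; rewrite /om /u0 /ncomp /ninr /= (natt0 Heps) sub0r.
  have -> : d 0%N Y (d 1%N Y x) = 0 by apply/(Hk 0%N hn); exists x.
  by rewrite oppr0.
apply: (IH (kmod HE) Yk dY eK).
- exact: kmod_mod.
- split; [|split; [|split; [|split]]].
  + move=> [|k] hk /=; last by apply: Hd.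
    apply: (kfac_natt HX0m) (Hu0 hk); apply: ncomp_natt; [exact: ninr_natt | exact: Hd].
  + apply: (kfac_natt HN) HeK0; apply: ncomp_natt; [exact: nfst_natt | exact: kinc_natt].
  + move=> Y k; have : e Y (eps Y (sval k)) = 0 by exact: (ksvalP k).
    move/(H0 isT) => [x hx].
    have hom : om Y (sval k, x) = 0 by rewrite /om /= hx subrr.
    exists (kmk (@nattD _ _ _ Hom Y) (sval k, x)); apply: ksval_inj.
    by rewrite kfacK // /ncomp /nfst /kinc kmkK.
  + move=> hn Y w; rewrite kmod_eq0 kfacK // /ncomp /nfst /kinc; split.
      move=> h1; have : d 0%N Y (sval w).2 = 0 by rewrite -omK h1 (natt0 Heps).
      move/(Hk 0%N hn) => [y hy]; exists y; apply: ksval_inj; rewrite /dY kfacK ?Hu0 //.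
      rewrite /u0 /ncomp /ninr hy; move: h1; by case: (sval w) => a b /= ->.
    move=> [y <-]; rewrite /dY kfacK ?Hu0 //.
  + move=> [|k] hk Y x /=.
      change (kfac (Ht := Hom) u0 Y x = 0 :> mob (kmod Hom) Y <-> exists y, d 2%N Y y = x).
      rewrite kmod_eq0 kfacK ?Hu0 //; last by apply: leq_trans hk.
      rewrite /u0 /ncomp /ninr; split.
        by move=> /(congr1 snd) /= h; apply/(Hk 1%N hk).
      by move=> /(Hk 1%N hk) ->.
    exact: Hk.
- move=> [|k] hk /=; first exact: HW.
  exact: (in_mod_mono (NFin n) (NFin n.+1) _ (leqnSn n) (HX k.+2 hk)).
Qed.

Lemma retract_seq P T (s : natt P T) (r : natt T P) n :
  is_module T -> is_natt s -> is_natt r -> (forall Y x, r Y (s Y x) = x) ->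
  exseq n (fun _ => T) (fun k => if odd k then ncomp s r else (fun Y x => x - s Y (r Y x))) P r.
Proof.
move=> HT Hs Hr Hrs.
have Hom : is_natt (fun Y (x : mob T Y) => x - s Y (r Y x)).
  split=> [Y x x'|X Y f x]; first by rewrite (nattD Hr) (nattD Hs) opprD addrACA.
  by rewrite (modB HT) (nattC Hr) (nattC Hs).
have Heps : is_natt (ncomp s r) by exact: ncomp_natt.
have sr2 : forall Y x, s Y (r Y (s Y (r Y x))) = s Y (r Y x) by move=> Y x; rewrite Hrs.
split; [|split; [|split; [|split]]] => //.
- by move=> k _; case: (odd k).
- by move=> Y x; exists (s Y x).
- move=> _ Y x /=; split.
    by move=> h; exists x; rewrite h (natt0 Hs) subr0.
  by move=> [y <-]; rewrite (nattB Hr) Hrs subrr.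
- move=> k _ Y x /=; case: (odd k) => /=; rewrite /ncomp; split.
  + by move=> h; exists x; rewrite h subr0.
  + by move=> [y <-]; rewrite (nattB Hr) (nattB Hs) sr2 subrr.
  + by move=> h; exists x; apply/eqP; rewrite eq_sym -subr_eq0 h.
  + by move=> [y <-]; rewrite sr2 subrr.
Qed.

Lemma retract_fin m P T (s : natt P T) (r : natt T P) :
  is_module P -> is_natt s -> is_natt r -> (forall Y x, r Y (s Y x) = x) ->
  in_mod (NFin m) T -> in_mod (NFin m) P.
Proof.
move=> HP Hs Hr Hrs HT.
apply: (G_fin m P (fun _ => T) _ r HP (@retract_seq P T s r (NFin m) (proj1 HT) Hs Hr Hrs)).
by move=> k _.
Qed.

Lemma syz_fin m N P (e : natt P N) (He : is_natt e) :
  is_module N -> is_fgproj P -> surj e -> in_mod (NFin m.+1) N -> in_mod (NFin m) (kmod He).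
Proof.
move=> HN HP Hse HNm.
have HPm := proj1 HP.
have [P' [e' [He' [HP' [Hse' HK']]]]] := char_elim HNm.
have HP'm := proj1 HP'.
pose om : natt (msum P P') N := fun Y p => e Y p.1 - e' Y p.2.
have Hom : is_natt om.
  split=> [Y [a b] [a' b']|X' Y f [a b]]; rewrite /om /=.
    by rewrite (nattD He) (nattD He') opprD addrACA.
  by rewrite (nattC He) (nattC He') (modB HN).
have omK : forall Y (w : mob (kmod Hom) Y), e Y (sval w).1 = e' Y (sval w).2.
  by move=> Y w; apply/eqP; rewrite -subr_eq0; apply/eqP; exact: (ksvalP w).
have Hi0 : forall Y (a : mob (kmod He') Y), om Y (ncomp (ninr P P') kinc Y a) = 0.
  by move=> Y a; rewrite /om /ncomp /ninr /kinc /= (ksvalP a) (natt0 He) subr0.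
have HW : in_mod (NFin m) (kmod Hom).
  apply: (ext_fin m (kmod He') (kmod Hom) P (kfac (ncomp (ninr P P') kinc)) (ncomp (nfst P P') kinc)).
  - apply: kmod_mod => //; exact: msum_mod.
  - apply: (kfac_natt HN) Hi0; apply: ncomp_natt; [exact: ninr_natt | exact: kinc_natt].
  - apply: ncomp_natt; [exact: nfst_natt | exact: kinc_natt].
  - move=> Y a /kmod_eq0; rewrite kfacK ?Hi0 // /ncomp /ninr /kinc => -[] /ksval_eq0 //.
  - move=> Y x; have [q hq] := Hse' Y (e Y x).
    exists (kmk (@nattD _ _ _ Hom Y) (x, q)).
    by rewrite /ncomp /nfst /kinc kmkK // /om /= hq subrr.
  - move=> Y w; split.
      rewrite /ncomp /nfst /kinc => h0.
      have hw : e' Y (sval w).2 = 0 by rewrite -omK h0 (natt0 He).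
      exists (kmk (@nattD _ _ _ He' Y) (sval w).2); apply: ksval_inj; rewrite kfacK ?Hi0 //.
      rewrite /ncomp /ninr /kinc kmkK //; move: h0; by case: (sval w) => a b /= ->.
    move=> [a <-]; rewrite /ncomp /nfst /kinc kfacK ?Hi0 //.
  - exact: HK'.
  - exact: fg_mod.
have [l [Hl Hlp]] := liftP HP' HPm He' He Hse.
pose r0 : natt (kmod Hom) P := fun Y w => (sval w).1 - l Y (sval w).2.
have Hr0 : is_natt r0.
  split=> [Y w w'|X' Y f w]; rewrite /r0.
    rewrite !ksvalD; case: (sval w) => a b; case: (sval w') => a' b' /=.
    by rewrite (nattD Hl) opprD addrACA.
  rewrite (kact HN) /=; case: (sval w) => a b /=.
  by rewrite (nattC Hl) (modB HPm).
have Hr00 : forall Y w, e Y (r0 Y w) = 0.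
  by move=> Y w; rewrite /r0 (nattB He) Hlp omK subrr.
have Hs0 : forall Y (a : mob (kmod He) Y), om Y (ncomp (ninl P P') kinc Y a) = 0.
  by move=> Y a; rewrite /om /ncomp /ninl /kinc /= (ksvalP a) (natt0 He') subr0.
apply: (retract_fin m (kmod He) (kmod Hom) (kfac (ncomp (ninl P P') kinc)) (kfac r0)).
- exact: kmod_mod.
- apply: (kfac_natt HN) Hs0; apply: ncomp_natt; [exact: ninl_natt | exact: kinc_natt].
- exact: (kfac_natt HN) Hr00.
- move=> Y a; apply: ksval_inj; rewrite kfacK // /r0 kfacK ?Hs0 //.
  by rewrite /ncomp /ninl /kinc /= (natt0 Hl) subr0.
- exact: HW.
Qed.

Definition good N := is_module N /\ forall m, in_mod (NFin m) N.

Lemma good_step N : good N ->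
  exists P (e : natt P N) (He : is_natt e), is_fgproj P /\ surj e /\ good (kmod He).
Proof.
move=> [HN Hm]; have [P [e [HP [He Hse]]]] := mod_elim (Hm 0%N).
exists P, e, He; split=> //; split=> //; split; first exact: kmod_mod (proj1 HP) HN.
move=> m; exact: syz_fin.
Qed.

Record stage := Stage { sN : pmod C; sG : good sN }.
Definition stepP (s : stage) :=
  constructive_indefinite_description _ (good_step _ (sG s)).
Definition stepE (s : stage) :=
  constructive_indefinite_description _ (proj2_sig (stepP s)).
Definition stepH (s : stage) :=
  constructive_indefinite_description _ (proj2_sig (stepE s)).
Definition nextS (s : stage) : stage :=
  @Stage (kmod (proj1_sig (stepH s))) (proj2 (proj2 (proj2_sig (stepH s)))).

Section Inter.
Variable N0 : pmod C.
Hypothesis HG0 : good N0.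
Fixpoint st (k : nat) : stage := match k with 0 => @Stage N0 HG0 | k'.+1 => nextS (st k') end.
Definition Pk k := proj1_sig (stepP (st k)).
Definition ek k : natt (Pk k) (sN (st k)) := proj1_sig (stepE (st k)).
Definition Hek k : is_natt (ek k) := proj1_sig (stepH (st k)).
Definition dk k : natt (Pk k.+1) (Pk k) := fun Y x => @kinc _ _ _ (Hek k) Y (ek k.+1 Y x).
Lemma Pk_proj k : is_fgproj (Pk k). Proof. exact: (proj1 (proj2_sig (stepH (st k)))). Qed.
Lemma ek_surj k : surj (ek k). Proof. exact: (proj1 (proj2 (proj2_sig (stepH (st k))))). Qed.
Lemma ek_exact k Y x : ek k Y x = 0 <-> exists y, dk k Y y = x.
Proof.
split.
  move=> h; have [y hy] := ek_surj k.+1 Y (kmk (@nattD _ _ _ (Hek k) Y) x).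
  by exists y; rewrite /dk /kinc hy kmkK.
by move=> [y <-]; rewrite /dk /kinc; exact: (ksvalP (ek k.+1 Y y)).
Qed.
Lemma inter_mod : in_mod NInf N0.
Proof.
split; first exact: (proj1 HG0).
exists Pk, dk, (ek 0%N); split; first by move=> k _; exact: Pk_proj.
split; [|split; [|split; [|split]]].
- move=> k _; apply: ncomp_natt; [exact: kinc_natt (proj1 (sG (st k))) | exact: Hek].
- exact: (Hek 0%N).
- exact: (ek_surj 0%N).
- move=> _ Y x; exact: (ek_exact 0%N Y x).
- move=> k _ Y x; apply: iff_trans _ (ek_exact k.+1 Y x); rewrite /dk /kinc.
  by split=> [h|->]; [exact: ksval_eq0 h|].
Qed.
End Inter.

Lemma inter N : is_module N -> (forall m, in_mod (NFin m) N) -> in_mod NInf N.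
Proof. move=> HN Hm; exact: (@inter_mod N (conj HN Hm)). Qed.

Lemma G_inf N (X : nat -> pmod C) (d : forall k, natt (X k.+1) (X k)) (e : natt (X 0%N) N) :
  is_module N -> exseq NInf X d N e -> (forall k, in_mod NInf (X k)) -> in_mod NInf N.
Proof.
move=> HN Hex HX; apply: inter => // m.
apply: (G_fin m N X d e HN); first exact: exseq_mono Hex.
move=> k _; exact: (in_mod_mono (NFin m) NInf _ isT (HX k)).
Qed.

Lemma G_all n N (X : nat -> pmod C) (d : forall k, natt (X k.+1) (X k)) (e : natt (X 0%N) N) :
  is_module N -> exseq n X d N e -> (forall k, len_inf k n -> in_mod n (X k)) -> in_mod n N.
Proof. case: n => [m|]; [exact: G_fin | move=> HN Hex HX; apply: G_inf HN Hex _ => k; exact: HX]. Qed.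

Lemma ext_all n A W Cm (i : natt A W) (p : natt W Cm) :
  is_module W -> is_natt i -> is_natt p -> inj0 i -> surj p ->
  (forall Y w, p Y w = 0 <-> exists a, i Y a = w) ->
  in_mod n A -> in_mod n Cm -> in_mod n W.
Proof.
case: n => [m|]; first exact: ext_fin.
move=> HW Hi Hp Hinj Hsp Hex HA HC; apply: inter => // m.
apply: (ext_fin m A W Cm i p) => //; exact: (in_mod_mono (NFin m) NInf _ isT).
Qed.

Lemma retract_all n P T (s : natt P T) (r : natt T P) :
  is_module P -> is_natt s -> is_natt r -> (forall Y x, r Y (s Y x) = x) ->
  in_mod n T -> in_mod n P.
Proof.
move=> HP Hs Hr Hrs HT.
apply: (G_all n P (fun _ => T) _ r HP (@retract_seq P T s r n (proj1 HT) Hs Hr Hrs)).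
by move=> k _.
Qed.

Fixpoint osum (m : nat) : ('I_m -> pmod C) -> pmod C :=
  match m with
  | 0 => fun _ => zmod0
  | m'.+1 => fun T => msum (T ord0) (osum m' (fun j => T (lift ord0 j)))
  end.
Fixpoint sall (P : pmod C) (m : nat) :
    forall T : 'I_m -> pmod C, (forall j, natt P (T j)) -> natt P (osum m T) :=
  match m return forall T : 'I_m -> pmod C, (forall j, natt P (T j)) -> natt P (osum m T) with
  | 0 => fun T s => nzero _ _
  | m'.+1 => fun T s => npair (s ord0) (sall P m' (fun j => T (lift ord0 j)) (fun j => s (lift ord0 j)))
  end.
Fixpoint rall (P : pmod C) (m : nat) :
    forall T : 'I_m -> pmod C, (forall j, natt (T j) P) -> natt (osum m T) P :=
  match m return forall T : 'I_m -> pmod C, (forall j, natt (T j) P) -> natt (osum m T) P with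
  | 0 => fun T r => nzero _ _
  | m'.+1 => fun T r => ncopair (r ord0) (rall P m' (fun j => T (lift ord0 j)) (fun j => r (lift ord0 j)))
  end.

Lemma osum_mod m : forall T : 'I_m -> pmod C, (forall j, is_module (T j)) -> is_module (osum m T).
Proof.
elim: m => [|m IH] T HT /=; first exact: zmod0_mod.
apply: msum_mod => //; exact: IH.
Qed.
Lemma sall_natt P m : forall T (s : forall j, natt P (T j)), (forall j, is_natt (s j)) -> is_natt (sall P m T s).
Proof.
elim: m => [|m IH] T s Hs /=; first by apply: nzero_natt; exact: zmod0_mod.
apply: npair_natt => //; exact: IH.
Qed.
Lemma rall_natt P m : is_module P -> forall T (r : forall j, natt (T j) P), (forall j, is_natt (r j)) -> is_natt (rall P m T r).
Proof.
move=> HP; elim: m => [|m IH] T r Hr /=; first exact: nzero_natt.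
apply: ncopair_natt => //; exact: IH.
Qed.
Lemma rall_sall P m : forall T (s : forall j, natt P (T j)) (r : forall j, natt (T j) P) Y x,
  rall P m T r Y (sall P m T s Y x) = \sum_(j < m) r j Y (s j Y x).
Proof.
elim: m => [|m IH] T s r Y x /=; first by rewrite big_ord0.
by rewrite big_ord_recl /ncopair /npair /= IH.
Qed.
Lemma osum_in n m : forall T : 'I_m -> pmod C, (forall j, in_mod n (T j)) -> in_mod n (osum m T).
Proof.
elim: m => [|m IH] T HT /=; first by apply: fg_mod; exact: zmod0_proj.
have HT0 := HT ord0; have HR := IH (fun j => T (lift ord0 j)) (fun j => HT (lift ord0 j)).
apply: (ext_all n _ _ _ (ninl (T ord0) (osum m (fun j => T (lift ord0 j)))) (nsnd _ _)).
- apply: msum_mod; [exact: proj1 HT0 | exact: proj1 HR].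
- apply: ninl_natt; exact: proj1 HR.
- exact: nsnd_natt.
- by move=> Y a /(congr1 fst).
- by move=> Y c; exists (0, c).
- move=> Y [a c]; rewrite /nsnd /ninl /=; split; first by move=> ->; exists a.
  by move=> [a' [_ <-]].
- exact: HT0.
- exact: HR.
Qed.

Lemma Fsum n P m (T : 'I_m -> pmod C) (s : forall j, natt P (T j)) (r : forall j, natt (T j) P) :
  is_module P -> (forall j, is_natt (s j) /\ is_natt (r j)) ->
  (forall Y x, \sum_(j < m) r j Y (s j Y x) = x) -> (forall j, in_mod n (T j)) -> in_mod n P.
Proof.
move=> HP Hsr Hsum HT.
apply: (retract_all n P (osum m T) (sall P m T s) (rall P m T r)) => //.
- apply: sall_natt => j; exact: proj1 (Hsr j).
- apply: rall_natt => // j; exact: proj2 (Hsr j).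
- by move=> Y x; rewrite rall_sall Hsum.
- exact: osum_in.
Qed.

End Cat.
End Gen.
Arguments modDf {C M} HM {X Y} f g m. Arguments modD {C M} HM {X Y} f m m'. Arguments modI {C M} HM {X} m.
Arguments modC {C M} HM {X Y Z} g f m. Arguments mod0 {C M} HM {X Y} f. Arguments modB {C M} HM {X Y} f m m'.
Arguments nattD {C M N t} Ht {X} m m'. Arguments natt0 {C M N t} Ht {X}. Arguments nattN {C M N t} Ht {X} m.
Arguments nattB {C M N t} Ht {X} m m'. Arguments natt_sum {C M N t} Ht {X n} F. Arguments nattC {C M N t} Ht {X Y} f m.
Arguments surj {C M N}. Arguments inj0 {C M N}. Arguments exseq {C}. Arguments resol {C}.
Arguments zmod0 {C}. Arguments zmod0_eq {C X}. Arguments nzero {C M N}. Arguments nzero_natt {C M N}.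
Arguments resol_iso {C Q n N N'} t. Arguments fg_mod {C n P}.

Lemma iso_mod (C : precat) (N N' : pmod C) (t : natt N N') :
  is_module N -> is_natt t -> surj t -> is_module N'.
Proof.
move=> HN Ht Hs; split.
- move=> X Y f g m; have [x <-] := Hs Y m; by rewrite -!(nattC Ht) (modDf HN) (nattD Ht).
- move=> X Y f m m'; have [x <-] := Hs Y m; have [x' <-] := Hs Y m'.
  by rewrite -(nattD Ht) -!(nattC Ht) (modD HN) (nattD Ht).
- move=> X m; have [x <-] := Hs X m; by rewrite -(nattC Ht) (modI HN).
- move=> X Y Z g f m; have [x <-] := Hs Z m; by rewrite -!(nattC Ht) (modC HN).
Qed.

Lemma triv_mod (C : precat) (N : pmod C) : (forall X (x : mob N X), x = 0) -> is_module N.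
Proof. move=> H; split=> *; by rewrite [LHS]H [RHS]H. Qed.

Lemma linfunE' (K : fieldType) (aT rT : vectType K) (f : aT -> rT) :
  (forall a x y, f (a *: x + y) = a *: f x + f y) -> forall x, linfun f x = f x.
Proof.
move=> Hf x.
have Hl : linear f by move=> a u v; exact: Hf.
pose g : {linear aT -> rT} := HB.pack f (GRing.isLinear.Build K aT rT _ f Hl).
exact: (lfunE g x).
Qed.

Lemma linfun_ext (K : fieldType) (aT rT : vectType K) (f g : aT -> rT) :
  (forall x, f x = g x) -> linfun f = linfun g.
Proof. by move=> h; congr linfun; apply: functional_extensionality. Qed.

Section Rep.
Variables (k : fieldType) (A : kcat k).
Hypothesis HA : is_klinear_cat A.
Variable i : int.
Local Notation CA := (precat_of A).

Lemma compA {X Y Z W} (h : hom A Z W) (g : hom A Y Z) (f : hom A X Y) :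
  comp A h (comp A g f) = comp A (comp A h g) f.
Proof. by case: HA => H _ _ _ _; apply: H. Qed.
Lemma comp1l {X Y} (f : hom A X Y) : comp A (idm A Y) f = f.
Proof. by case: HA => _ H _ _ _; apply: H. Qed.
Lemma comp1r {X Y} (f : hom A X Y) : comp A f (idm A X) = f.
Proof. by case: HA => _ _ H _ _; apply: H. Qed.
Lemma compDl {X Y Z} (g g' : hom A Y Z) (f : hom A X Y) : comp A (g + g') f = comp A g f + comp A g' f.
Proof. case: HA => _ _ _ H _; by have := H X Y Z 1 g g' f; rewrite !scale1r. Qed.
Lemma compDr {X Y Z} (g : hom A Y Z) (f f' : hom A X Y) : comp A g (f + f') = comp A g f + comp A g f'.
Proof. case: HA => _ _ _ _ H; by have := H X Y Z 1 g f f'; rewrite !scale1r. Qed.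
Lemma comp0l {X Y Z} (f : hom A X Y) : comp A (0 : hom A Y Z) f = 0.
Proof. exact: (addf0 (f := fun g => comp A g f) (fun g g' => compDl g g' f)). Qed.
Lemma comp0r {X Y Z} (g : hom A Y Z) : comp A g (0 : hom A X Y) = 0.
Proof. exact: (addf0 (f := fun f => comp A g f) (fun f f' => compDr g f f')). Qed.

Lemma snd_lin {X Y} a (x y : amb _ A X Y) : (a *: x + y).2 = a *: x.2 + y.2.
Proof. by case: x; case: y. Qed.
Lemma fst_lin {X Y} a (x y : amb _ A X Y) : (a *: x + y).1 = a *: x.1 + y.1.
Proof. by case: x; case: y. Qed.

Lemma int_neq1 : (i == i + 1) = false.
Proof. by rewrite -[X in X == _]addr0 (inj_eq (addrI i)). Qed.

Lemma mem_ii {X Y} (p : amb _ A X Y) : (p \in rsp _ A X Y i i) = (p.2 == 0).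
Proof. by rewrite /rsp eqxx memv_ker linfunE' //; exact: snd_lin. Qed.
Lemma mem_i1 {X Y} (p : amb _ A X Y) : (p \in rsp _ A X Y i (i + 1)) = (p.1 == 0).
Proof. by rewrite /rsp int_neq1 eqxx memv_ker linfunE' //; exact: fst_lin. Qed.

Definition psi X Y (u : hom A X Y) : homR _ A (X, i) (Y, i) := vsproj (rsp _ A X Y i i) (u, 0).
Definition phi X Y (g : homR _ A (X, i) (Y, i)) : hom A X Y := (vsval g).1.
Arguments psi {X Y}. Arguments phi {X Y}.

Lemma psi_val {X Y} (u : hom A X Y) : vsval (psi u) = (u, 0).
Proof. by rewrite vsprojK // mem_ii. Qed.
Lemma psiK {X Y} (u : hom A X Y) : phi (psi u) = u.
Proof. by rewrite /phi psi_val. Qed.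
Lemma phi_snd {X Y} (g : homR _ A (X, i) (Y, i)) : (vsval g).2 = 0.
Proof. by apply/eqP; rewrite -mem_ii; exact: subvsP. Qed.
Lemma phiK {X Y} (g : homR _ A (X, i) (Y, i)) : psi (phi g) = g.
Proof.
apply: val_inj => /=; rewrite psi_val /phi -(phi_snd g); by case: (vsval g).
Qed.
Lemma psiD {X Y} (u v : hom A X Y) : psi (u + v) = psi u + psi v.
Proof. by rewrite /psi -raddfD pairD addr0. Qed.
Lemma phiD {X Y} (g g' : homR _ A (X, i) (Y, i)) : phi (g + g') = phi g + phi g'.
Proof. by rewrite /phi raddfD. Qed.

Lemma lin0 (aT bT : vectType k) (F : aT -> bT) :
  linfun (fun h : aT => (0 : 'Hom(bT, k^o)) (F h)) = 0.
Proof. by rewrite (@linfun_ext _ _ _ _ (fun _ => 0)) // => h; rewrite zero_lfunE. Qed.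

Lemma ambcomp00 {X Y Z} (u : hom A Y Z) (v : hom A X Y) :
  ambcomp _ A X Y Z (u, 0) (v, 0) = (comp A u v, 0).
Proof. by rewrite /ambcomp /= !lin0 addr0. Qed.

Lemma psi_comp {X Y Z} (u : hom A Y Z) (v : hom A X Y) :
  compR _ A (X, i) (Y, i) (Z, i) (psi u) (psi v) = psi (comp A u v).
Proof. by rewrite /compR /= !psi_val ambcomp00. Qed.
Lemma phi_comp {X Y Z} (g : homR _ A (Y, i) (Z, i)) (f : homR _ A (X, i) (Y, i)) :
  phi (compR _ A (X, i) (Y, i) (Z, i) g f) = comp A (phi g) (phi f).
Proof. by rewrite -{1}(phiK g) -{1}(phiK f) psi_comp psiK. Qed.
Lemma phi_id {X} : phi (idR _ A (X, i)) = idm A X.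
Proof. exact: psiK. Qed.

(* restriction to A_i, viewed over A *)
Definition pr (M : pmod (RA A)) : pmod CA :=
  @PMod CA (fun X => mob M (X, i)) (fun X Y u m => @mact (RA A) M (X, i) (Y, i) (psi u) m).

Lemma pr_mod M : is_module M -> is_module (pr M).
Proof.
move=> HM; split=> /= [X Y f g m|X Y f m m'|X m|X Y Z g f m].
- by rewrite psiD (modDf HM).
- by rewrite (modD HM).
- exact: (modI HM).
- rewrite /= -(modC HM); congr (mact M _ m); exact: (esym (psi_comp g f)).
Qed.

Definition prn {M N : pmod (RA A)} (t : natt M N) : natt (pr M) (pr N) := fun X => t (X, i).
Lemma prn_natt (M N : pmod (RA A)) (t : natt M N) : is_natt t -> is_natt (prn t).
Proof. move=> Ht; split=> [X m m'|X Y f m]; rewrite /prn; [exact: (nattD Ht)|exact: (nattC Ht)]. Qed.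

Lemma pr_exseq n (X : nat -> pmod (RA A)) d N e : exseq n X d N e ->
  exseq n (fun k => pr (X k)) (fun k => prn (d k)) (pr N) (prn e).
Proof.
move=> [H1 [H2 [H3 [H4 H5]]]]; split; [|split; [|split; [|split]]].
- by move=> kk hk; apply: prn_natt; apply: H1.
- exact: prn_natt.
- by move=> Y x; apply: H3.
- by move=> h Y x; apply: H4.
- by move=> kk hk Y x; apply: H5.
Qed.

Definition pu (N : pmod CA) : pmod (RAi A i) :=
  @PMod (RAi A i) (fun X => mob N X) (fun X Y g m => mact N (phi g) m).

Lemma pu_mod N : is_module N -> is_module (pu N).
Proof.
move=> HN; split=> /= [X Y f g m|X Y f m m'|X m|X Y Z g f m].
- by rewrite phiD (modDf HN).
- by rewrite (modD HN).
- rewrite phi_id; exact: (modI HN).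
- by rewrite phi_comp (modC HN).
Qed.
Definition pun {M N : pmod CA} (t : natt M N) : natt (pu M) (pu N) := t.
Lemma pun_natt (M N : pmod CA) (t : natt M N) : is_natt t -> is_natt (pun t).
Proof. move=> Ht; split=> [X m m'|X Y f m]; rewrite /pun; [exact: (nattD Ht)|exact: (nattC Ht)]. Qed.

Lemma pu_proj P : is_fgproj P -> is_fgproj (pu P).
Proof.
move=> [HP [m [Xs [s [r [Hsr Hsum]]]]]]; split; first exact: pu_mod.
exists m, Xs, (fun j Y x => psi (s j Y x)), (fun j Y g => r j Y (phi g)); split.
  move=> j; have [Hs Hr] := Hsr j; split; split.
  - by move=> Y x x'; rewrite /= (nattD Hs) psiD.
  - move=> X Y g x /=; rewrite (nattC Hs) /=.
    rewrite -[in RHS](phiK g); exact: (esym (psi_comp _ _)).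
  - by move=> Y x x'; rewrite /= phiD (nattD Hr).
  - by move=> X Y g x /=; rewrite phi_comp (nattC Hr).
by move=> Y x /=; under eq_bigr do rewrite psiK; exact: Hsum.
Qed.

Lemma pu_in n N : in_mod n N -> in_mod n (pu N).
Proof.
move=> [HN [X [d [e [hX [H1 [H2 [H3 [H4 H5]]]]]]]]]; split; first exact: pu_mod.
exists (fun k => pu (X k)), (fun k => pun (d k)), (pun e); split.
  by move=> kk hk; apply: pu_proj; apply: hX.
split; [|split; [|split; [|split]]].
- by move=> kk hk; apply: pun_natt; apply: H1.
- exact: pun_natt.
- exact: H3.
- exact: H4.
- exact: H5.
Qed.

Lemma Cidl : forall (X Y : pob CA) (f : phom CA X Y), pcomp (pid Y) f = f.
Proof. move=> X Y f; exact: comp1l. Qed.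

Lemma ambcomp0l {X Y Z} (ph : 'Hom(hom A Z Y, k^o)) (f : hom A X Y) :
  ambcomp _ A X Y Z (0, ph) (f, 0) = (0, linfun (fun h : hom A Z X => ph (comp A f h))).
Proof. by rewrite /ambcomp /= comp0l lin0 addr0. Qed.

Lemma base n (Hdual : forall X : ob A, in_mod n (dualrep X)) (Y : ob A * int) : in_mod n (pr (repr (C := RA A) Y)).
Proof.
case: Y => Y j.
have Hrp := repr_proj CA (fun X Y Z W h g f => compA h g f) (fun X Y f => comp1r f)
  (fun X Y Z g g' f => compDl g g' f) (fun X Y Z g f f' => compDr g f f').
case: (eqVneq j i) => [->|hji].
  pose t : natt (repr (C := CA) Y) (pr (repr ((Y, i) : pob (RA A)))) := fun X u => psi u.
  have Ht : is_natt t.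
    split=> [X u u'|X X' f u]; first exact: psiD.
    exact: (esym (psi_comp _ _)).
  have Hs : surj t by move=> X g; exists (phi g); exact: phiK.
  rewrite in_modE; apply: (resol_iso t) => //.
  - exact: (iso_mod _ _ _ _ (proj1 (Hrp Y)) Ht Hs).
  - move=> X u hu; rewrite -(psiK u); have -> : psi u = 0 := hu; by rewrite /phi raddf0.
  - rewrite -in_modE; exact: (fg_mod (Hrp Y)).
case: (eqVneq j (i + 1)) => [->|hj1].
  pose t : natt (dualrep Y) (pr (repr ((Y, i + 1) : pob (RA A)))) :=
    fun X ph => vsproj (rsp _ A X Y i (i + 1)) (0, ph).
  have tval : forall X ph, vsval (t X ph) = (0, ph).
    by move=> X ph; rewrite vsprojK // mem_i1.
  have Ht : is_natt t.
    split=> [X u u'|X X' f u].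
      by rewrite /t -raddfD pairD addr0.
    apply: (can_inj vsvalK); rewrite /= tval /compR /= vsprojK; last first.
      rewrite mem_i1 /ambcomp /=. rewrite tval; by rewrite comp0l.
    by rewrite tval psi_val ambcomp0l.
  have Hs : surj t.
    move=> X g; exists (vsval g).2; apply: (can_inj vsvalK); rewrite tval.
    have : (vsval g).1 == 0 by rewrite -mem_i1; exact: subvsP.
    by move/eqP <-; case: (vsval g).
  rewrite in_modE; apply: (resol_iso t) => //.
  - exact: (iso_mod _ _ _ _ (proj1 (Hdual Y)) Ht Hs).
  - move=> X u hu; have := tval X u; rewrite hu raddf0 => /(congr1 snd) /= <- //.
  - rewrite -in_modE; exact: Hdual.
have H0 : forall X (g : mob (pr (repr ((Y, j) : pob (RA A)))) X), g = 0.
  move=> X g.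
  have H0v : forall v : amb _ A X Y, v \in rsp _ A X Y i j -> v = 0.
    move=> v; rewrite /rsp [i == j]eq_sym (negbTE hji) (negbTE hj1) memv0 => /eqP //.
  apply: (can_inj vsvalK); rewrite raddf0; apply: H0v; exact: subvsP.
have HT := triv_mod _ _ H0.
rewrite in_modE; apply: (resol_iso (@nzero CA (zmod0 (C := CA)) (pr (repr (C := RA A) (Y, j))))) => //.
- exact: nzero_natt.
- by move=> X x _; exact: zmod0_eq.
- by move=> X x; exists 0; rewrite (H0 X x).
- rewrite -in_modE; exact: (fg_mod (zmod0_proj CA)).
Qed.

Lemma rho_mod (M : pmod (RA A)) : is_module M -> is_module (rho i M).
Proof.
case=> H1 H2 H3 H4; split=> [X Y f g m|X Y f m m'|X m|X Y Z g f m].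
- exact: H1. - exact: H2. - exact: H3. - exact: H4.
Qed.

Lemma main_rep n : (forall X : ob A, in_mod n (dualrep X)) ->
  forall M : pmod (RA A), in_mod n M -> in_mod n (rho i M).
Proof.
move=> Hdual M [HM [P [d [e [hP Hex]]]]].
have HprM : in_mod n (pr M).
  apply: (G_all CA Cidl n (pr M) (fun kk => pr (P kk)) (fun kk => prn (d kk)) (prn e)).
  - exact: pr_mod.
  - exact: pr_exseq Hex.
  - move=> kk hk; have [HPm [m [Xs [s [r [Hsr Hsum]]]]]] := hP kk hk.
    apply: (Fsum CA Cidl n (pr (P kk)) m (fun j => pr (repr (Xs j))) (fun j => prn (s j)) (fun j => prn (r j))).
    + exact: pr_mod.
    + move=> j; have [Hs Hr] := Hsr j; split; exact: prn_natt.
    + move=> Y x; exact: Hsum.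
    + move=> j; exact: base.
have H2 := pu_in _ _ HprM.
rewrite in_modE in H2 *.
apply: (resol_iso (fun X (m : mob (pu (pr M)) X) => (m : mob (rho i M) X))) H2.
- exact: rho_mod.
- split=> [X m m'|X Y g m] //=.
  congr (mact M _ m); exact: phiK.
- by move=> X x.
- by move=> X x; exists x.
Qed.
End Rep.

Theorem mainTheorem15 (k : fieldType) (A : kcat k) (n : natinf) :
  is_klinear_cat A -> is_additive_kcat A ->
  (forall X : ob A, in_mod n (dualrep X)) ->
  forall (i : int) (M : pmod (RA A)), in_mod n M -> in_mod n (rho i M).
Proof.
move=> HA _ Hdual i M HM; exact: (@main_rep k A HA i n Hdual M HM).
Qed.
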